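(* Let $A=\{a_1,a_2,\dots,a_n\}\subseteq\mathbb{Z}_N$ be a $B_t[N;1]$ set. In the group $\mathbb{Z}_N \times \mathbb{Z}_{2t+1}$, let \[S\triangleq \{ (a_i,1) : a_i \in A\}.\] Then $\mathbb{Z}_N \times \mathbb{Z}_{2t+1} \ge \{-1,1\} \diamond_t S$.
   Context: A subset $A\subseteq\mathbb{Z}_N$ is a $B_t[N;1]$ set if the sums of any $t$ (not necessarily distinct) elements of $A$ are all different modulo $N$, i.e., distinct multisets of $t$ elements of $A$ have distinct sums in $\mathbb{Z}_N$. For a finite Abelian group $G$, a finite set $M\subseteq\mathbb{Z}\setminus\{0\}$ and $S=\{s_1,\dots,s_n\}\subseteq G$, we write $G\ge M\diamond_t S$ if the elements $\mathbf{e}\cdot(s_1,\dots,s_n)=\sum_i e_is_i$, over all $\mathbf{e}\in(M\cup\{0\})^n$ with $1\le\mathrm{wt}(\mathbf{e})\le t$, are all distinct and non-zero in $G$ (here $e_is_i$ is the $e_i$-fold group multiple, $\mathrm{wt}$ the Hamming weight). *)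

(* Defs.v *)
From HB Require Import structures.
From mathcomp Require Import all_boot all_order all_algebra.
Set Implicit Arguments. Unset Strict Implicit. Unset Printing Implicit Defensive.
Import GRing.Theory.
Local Open Scope ring_scope.

(* Z_N is modelled by 'I_(N.-1).+1 (for N >= 1), which carries MathComp's
   canonical additive group structure of integers mod N (zmodp). *)

(* A is a B_t[N;1] set in the finite abelian group G: distinct multisets of
   t elements of A (count functions supported on A with total multiplicity t)
   have distinct sums. *)
Definition Bt_set (G : finZmodType) (t : nat) (A : {set G}) : Prop :=
  forall m m' : {ffun G -> nat},
    (forall x, x \notin A -> m x = 0%N) ->
    (forall x, x \notin A -> m' x = 0%N) ->
    (\sum_x m x)%N = t -> (\sum_x m' x)%N = t ->
    m != m' ->
    \sum_x (x *+ m x) != \sum_x (x *+ m' x).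

Definition wt (n : nat) (e : {ffun 'I_n -> int}) : nat := #|[set i | e i != 0]|.

Definition dotv (G : zmodType) (n : nat) (e : {ffun 'I_n -> int}) (s : 'I_n -> G) : G :=
  \sum_i (s i *~ e i).

(* G >= M <>_t S : all e . S with e in (M u {0})^n, 1 <= wt e <= t are
   distinct and nonzero. *)
Definition diamond (G : zmodType) (M : seq int) (t n : nat) (s : 'I_n -> G) : Prop :=
  forall e e' : {ffun 'I_n -> int},
    (forall i, (e i \in M) || (e i == 0)) ->
    (forall i, (e' i \in M) || (e' i == 0)) ->
    (1 <= wt e <= t)%N -> (1 <= wt e' <= t)%N ->
    dotv e s != 0 /\ (e != e' -> dotv e s != dotv e' s).

(* Main.v *)
From HB Require Import structures.
From mathcomp Require Import all_boot all_order all_algebra zify.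
Import GRing.Theory Num.Theory Order.TTheory.
Local Open Scope ring_scope.
Require Import Defs.
Set Implicit Arguments. Unset Strict Implicit.

Section Core.
Variables (G : finZmodType) (n t : nat) (A : {set G}) (a : 'I_n -> G).
Hypotheses (ainj : injective a) (aA : forall i, a i \in A) (Bt : Bt_set t A).

Definition Mf (f : 'I_n -> nat) : {ffun G -> nat} :=
  [ffun x => (\sum_(i | a i == x) f i)%N].

Lemma Mf_sum f : (\sum_x Mf f x)%N = (\sum_i f i)%N.
Proof.
rewrite [RHS](partition_big a predT) //=.
by apply: eq_bigr => x _; rewrite ffunE.
Qed.

Lemma Mf_dot f : \sum_x (x *+ Mf f x) = \sum_i (a i *+ f i).
Proof.
rewrite [RHS](partition_big a predT) //=.
apply: eq_bigr => x _; rewrite ffunE -sumrMnr.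
by apply: eq_bigr => i /eqP ->.
Qed.

Lemma Mf_at f i : Mf f (a i) = f i.
Proof.
rewrite ffunE (big_pred1 i) // => j /=.
by rewrite (inj_eq ainj).
Qed.

Lemma Mf_supp f x : x \notin A -> Mf f x = 0%N.
Proof.
move=> xA; rewrite ffunE big_pred0 // => i /=.
by apply/negP => /eqP ai; move: xA; rewrite -ai aA.
Qed.

Lemma core (f g : 'I_n -> nat) (i0 : 'I_n) :
  (\sum_i f i)%N = t -> (\sum_i g i)%N = t -> f i0 != g i0 ->
  \sum_i (a i *+ f i) != \sum_i (a i *+ g i).
Proof.
move=> sf sg fg; rewrite -!Mf_dot; apply: Bt.
- exact: Mf_supp.
- exact: Mf_supp.
- by rewrite Mf_sum.
- by rewrite Mf_sum.
apply/negP => /eqP E; move: fg; by rewrite -!(Mf_at _ i0) E eqxx.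
Qed.
End Core.

Lemma wt_abs n (e : {ffun 'I_n -> int}) :
  (forall i, `|e i| <= 1) -> wt e = (\sum_i absz (e i))%N.
Proof.
move=> He; rewrite /wt -sum1_card big_mkcond /=.
apply: eq_bigr => i _; rewrite inE; have := He i.
case: (e i) => [[|[|k]]|k] //=.
by rewrite NegzE normrN lez_nat; case: k.
Qed.

Lemma zp_int0 m (z : int) : `|z| < (m.+2)%:Z -> (z%:~R : 'I_m.+2) = 0 -> z = 0.
Proof.
case: z => k /= hk.
  have hk' : (k < m.+2)%N by move: hk; rewrite ltz_nat.
  move=> /(congr1 val) /=; rewrite -pmulrn Zp_nat /= modn_small //.
  by move->.
have hk' : (k.+1 < m.+2)%N by move: hk; rewrite NegzE normrN ltz_nat.
rewrite NegzE mulrNz => /eqP; rewrite oppr_eq0 => /eqP /(congr1 val) /=.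
by rewrite -pmulrn Zp_nat /= modn_small.
Qed.

Lemma sum_abs_le n (e : 'I_n -> int) : `|\sum_i e i| <= (\sum_i absz (e i))%N%:Z.
Proof.
apply: le_trans (ler_norm_sum _ _ _) _.
by rewrite (big_morph Posz PoszD (erefl _)); apply: ler_sum => i _; rewrite abszE.
Qed.

Lemma snd_eq t (x y : int) : (0 < t)%N -> `|x - y| <= (t.*2)%:Z ->
  (Zp1 : 'I_(t.*2).+1) *~ x = Zp1 *~ y -> x = y.
Proof.
case: t => // t' _ h /eqP; rewrite -subr_eq0 -mulrzBr => /eqP E.
apply/eqP; rewrite -subr_eq0; apply/eqP.
by apply: (@zp_int0 (t'.*2.+1)) => //; apply: le_lt_trans h _; rewrite ltz_nat.
Qed.

Lemma fst_sum (U V : zmodType) n (F : 'I_n -> U * V) :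
  (\sum_i F i).1 = \sum_i (F i).1.
Proof. exact: (raddf_sum (@fst U V)). Qed.
Lemma snd_sum (U V : zmodType) n (F : 'I_n -> U * V) :
  (\sum_i F i).2 = \sum_i (F i).2.
Proof. exact: (raddf_sum (@snd U V)). Qed.
Lemma fst_mulz (U V : zmodType) (x : U * V) z : (x *~ z).1 = x.1 *~ z.
Proof. exact: (raddfMz (@fst U V)). Qed.
Lemma snd_mulz (U V : zmodType) (x : U * V) z : (x *~ z).2 = x.2 *~ z.
Proof. exact: (raddfMz (@snd U V)). Qed.

Theorem theorem9 (N t : nat) (hN : (0 < N)%N) (A : {set 'I_(N.-1).+1}) :
  Bt_set t A ->
  diamond [:: -1; 1] t
    (fun i : 'I_#|A| =>
       ((@enum_val _ (mem A) i, Zp1) : 'I_(N.-1).+1 * 'I_(t.*2).+1)).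
Proof.
move=> Bt.
set s := (fun i : 'I_#|A| => _).
pose a := fun i : 'I_#|A| => @enum_val _ (mem A) i.
have ainj : injective a by exact: enum_val_inj.
have aA : forall i, a i \in A by move=> i; exact: enum_valP.
have key : forall e e' : {ffun 'I_#|A| -> int},
    (forall i, `|e i| <= 1) -> (forall i, `|e' i| <= 1) ->
    (wt e <= t)%N -> (wt e' <= t)%N -> e != e' -> dotv e s = dotv e' s -> False.
  move=> e e' He He' we we' nee deq.
  have /existsP [i0 hi0] : [exists i, e i != e' i].
    apply: contraNT nee => /existsPn h; apply/eqP/ffunP => i; apply/eqP.
    by move: (h i); rewrite negbK.
  pose d i := e i - e' i.
  pose D := (\sum_i absz (d i))%N.
  have hD : (D <= wt e + wt e')%N.
    rewrite (wt_abs He) (wt_abs He') -big_split /=; apply: leq_sum => i _.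
    by have := leqD_dist (e i) 0 (e' i); rewrite subr0 sub0r abszN.
  have hD1 : (0 < D)%N.
    rewrite /D (bigD1 i0) //=; apply: leq_trans (leq_addr _ _).
    by rewrite absz_gt0 /d subr_eq0.
  have tpos : (0 < t)%N by lia.
  have sE : \sum_i e i = \sum_i e' i.
    apply: (snd_eq tpos).
      rewrite -sumrB; apply: le_trans (sum_abs_le _) _.
      rewrite lez_nat -/d -/D; lia.
    move: (congr1 snd deq); rewrite /dotv !snd_sum.
    rewrite !mulrz_sumr; congr (_ = _); apply: eq_bigr => i _;
    by rewrite snd_mulz.
  pose p i := if (0 <= d i) then absz (d i) else 0%N.
  pose q i := if (0 <= d i) then 0%N else absz (d i).
  have hpq i : (p i)%:Z - (q i)%:Z = d i.
    rewrite /p /q; case: ifP => h.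
      by rewrite subr0 gez0_abs.
    by rewrite sub0r ltz0_abs ?opprK // ltNge h.
  have hpq' i : (p i + q i)%N = absz (d i).
    by rewrite /p /q; case: ifP; rewrite ?addn0.
  have sPQ : (\sum_i p i = \sum_i q i)%N.
    apply/eqP; rewrite -eqz_nat; apply/eqP; apply/eqP; rewrite -subr_eq0.
    rewrite !(big_morph Posz PoszD (erefl _)) -sumrB.
    under eq_bigr do rewrite hpq.
    by rewrite sumrB sE subrr.
  have sPQ2 : (\sum_i p i + \sum_i q i)%N = D.
    by rewrite -big_split /=; apply: eq_bigr => i _; rewrite hpq'.
  have pt : (\sum_i p i <= t)%N by lia.
  pose c := (t - \sum_i p i)%N.
  pose f i := (p i + (i == i0) * c)%N.
  pose g i := (q i + (i == i0) * c)%N.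
  have sumc : (\sum_i (i == i0) * c = c)%N.
    by rewrite (bigD1 i0) //= eqxx mul1n big1 ?addn0 // => j /negbTE ->.
  have sf : (\sum_i f i)%N = t.
    by rewrite big_split /= sumc /c subnKC.
  have sg : (\sum_i g i)%N = t.
    by rewrite big_split /= sumc -sPQ /c subnKC.
  have fg : f i0 != g i0.
    rewrite /f /g eqxx mul1n eqn_add2r; apply/negP => /eqP E.
    move: (hpq i0); rewrite E subrr => /esym /eqP.
    by rewrite /d subr_eq0 (negbTE hi0).
  have := core ainj aA Bt sf sg fg; rewrite -subr_eq0 => /eqP; apply.
  rewrite -sumrB.
  under eq_bigr do rewrite !pmulrn -mulrzBr -!/(Posz _) !PoszD.
  transitivity (\sum_i a i *~ d i).
    apply: eq_bigr => i _; congr (_ *~ _).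
    by rewrite -(hpq i); lia.
  under eq_bigr do rewrite mulrzBr.
  rewrite sumrB; apply/eqP; rewrite subr_eq0; apply/eqP.
  move: (congr1 fst deq); rewrite /dotv !fst_sum.
  by congr (_ = _); apply: eq_bigr => i _; rewrite fst_mulz.
have absM : forall (e : {ffun 'I_#|A| -> int}),
    (forall i, (e i \in [:: -1; 1]) || (e i == 0)) -> forall i, `|e i| <= 1.
  move=> e He i; move: (He i); rewrite !inE.
  by case/orP => [/orP [] | ] /eqP ->.
move=> e e' He He' /andP [w1 wt1] /andP [w1' wt1']; split.
  apply/eqP => E.
  apply: (key e 0 (absM _ He)) => //.
  - by move=> i; rewrite ffunE.
  - rewrite /wt; apply: leq_trans (leq0n _); apply: eq_leq.
    by apply/eqP; rewrite cards_eq0; apply/eqP/setP => i; rewrite !inE ffunE eqxx.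
  - apply: contraTneq w1 => ->; rewrite /wt -leqNgt leqn0 cards_eq0.
    by apply/eqP/setP => i; rewrite !inE ffunE eqxx.
  - rewrite E /dotv; symmetry; apply: big1 => i _; by rewrite ffunE.
move=> nee; apply/eqP => E.
exact: (key e e' (absM _ He) (absM _ He') wt1 wt1' nee E).
Qed.
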